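(* Let $\mathcal{LC}$ be the local-causal polytope of conditional distributions $p(a_1a_2bc\mid x_1x_2yz)$ with all variables binary (defined in the context). If $p\in\mathcal{LC}$ then $$p(b=0, a_2=x_1 \mid y=0) + p(b=1, a_1=x_2 \mid y=0) + p(b\oplus c = yz\mid x_1=x_2=0) \leq \frac74,$$ and this bound is attained by some $p\in\mathcal{LC}$.
   Context: All settings $x_1,x_2,y,z$ and outcomes $a_1,a_2,b,c$ take values in $\{0,1\}$; $\oplus$ is addition mod 2. Let $\mathcal P$ be the set of all conditional probability distributions $p(a_1a_2bc\mid x_1x_2yz)$. For a set $S$ of outcome variables and a set $T$ of setting variables, write $S\perp_p T$ to mean that the marginal $\sum_{\text{outcomes not in }S} p(a_1a_2bc\mid x_1x_2yz)$ is, for every value of the outcomes in $S$ and of the settings not in $T$, independent of the values of the settings in $T$. Define $\mathcal{NS}=\{p\in\mathcal P: \{a_1,a_2,c\}\perp_p \{y\}\text{ and } \{b\}\perp_p\{x_1,x_2,z\}\}$; $\mathcal{LC}_1=\{p\in\mathcal{NS}: \{a_1,b\}\perp_p\{x_2\}\text{ and }\{a_1,a_2,b\}\perp_p\{z\}\}$; $\mathcal{LC}_2=\{p\in\mathcal{NS}: \{a_2,b\}\perp_p\{x_1\}\text{ and }\{a_1,a_2,b\}\perp_p\{z\}\}$; $\mathcal{LC}=\{\mu p_1+(1-\mu)p_2:\mu\in[0,1],\,p_1\in\mathcal{LC}_1,\,p_2\in\mathcal{LC}_2\}$. Shorthand (settings treated as uniformly and independently distributed): $p(b=0,a_2=x_1\mid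 y=0)=\frac18\sum_{x_1,x_2,z}p(b=0,a_2=x_1\mid x_1x_2,y=0,z)$; $p(b=1,a_1=x_2\mid y=0)=\frac18\sum_{x_1,x_2,z}p(b=1,a_1=x_2\mid x_1x_2,y=0,z)$; $p(b\oplus c=yz\mid x_1=x_2=0)=\frac14\sum_{y,z}p(b\oplus c=yz\mid x_1=x_2=0,y,z)$, where each event probability is the sum of $p(a_1a_2bc\mid x_1x_2yz)$ over outcomes satisfying the event. *)

(* Defs.v *)
From HB Require Import structures.
From mathcomp Require Import all_boot all_order all_algebra.
Set Implicit Arguments. Unset Strict Implicit. Unset Printing Implicit Defensive.
Import Order.TTheory GRing.Theory Num.Theory.
Local Open Scope ring_scope.

Definition V4 := {ffun 'I_4 -> bool}.

Definition i0 : 'I_4 := @Ordinal 4 0 isT.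
Definition i1 : 'I_4 := @Ordinal 4 1 isT.
Definition i2 : 'I_4 := @Ordinal 4 2 isT.
Definition i3 : 'I_4 := @Ordinal 4 3 isT.

Notation oA1 := i0. Notation oA2 := i1. Notation oB := i2. Notation oC := i3.
Notation sX1 := i0. Notation sX2 := i1. Notation sY := i2. Notation sZ := i3.

(* p o s = p(a1 a2 b c | x1 x2 y z) *)
Definition behav (R : realFieldType) := V4 -> V4 -> R.

Section Defs.
Variable R : realFieldType.

Definition is_cond_distr (p : behav R) : Prop :=
  (forall o s, 0 <= p o s) /\ (forall s, \sum_(o : V4) p o s = 1).

Definition marg (S : {set 'I_4}) (p : behav R) (o s : V4) : R :=
  \sum_(o' : V4 | [forall i in S, o' i == o i]) p o' s.

Definition indep (S T : {set 'I_4}) (p : behav R) : Prop :=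
  forall o s s' : V4, [forall i in ~: T, s i == s' i] ->
    marg S p o s = marg S p o s'.

Definition NS (p : behav R) : Prop :=
  is_cond_distr p /\
  indep [set oA1; oA2; oC] [set sY] p /\ indep [set oB] [set sX1; sX2; sZ] p.

Definition LC1 (p : behav R) : Prop :=
  NS p /\ indep [set oA1; oB] [set sX2] p /\ indep [set oA1; oA2; oB] [set sZ] p.

Definition LC2 (p : behav R) : Prop :=
  NS p /\ indep [set oA2; oB] [set sX1] p /\ indep [set oA1; oA2; oB] [set sZ] p.

Definition LC (p : behav R) : Prop :=
  exists (mu : R) (p1 p2 : behav R),
    [/\ 0 <= mu <= 1, LC1 p1, LC2 p2 &
        forall o s, p o s = mu * p1 o s + (1 - mu) * p2 o s].

(* p(b=0, a2=x1 | y=0) *)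
Definition term1 (p : behav R) : R :=
  8^-1 * \sum_(s : V4 | s sY == false)
           \sum_(o : V4 | (o oB == false) && (o oA2 == s sX1)) p o s.

(* p(b=1, a1=x2 | y=0) *)
Definition term2 (p : behav R) : R :=
  8^-1 * \sum_(s : V4 | s sY == false)
           \sum_(o : V4 | (o oB == true) && (o oA1 == s sX2)) p o s.

(* p(b xor c = yz | x1=x2=0) *)
Definition term3 (p : behav R) : R :=
  4^-1 * \sum_(s : V4 | (s sX1 == false) && (s sX2 == false))
           \sum_(o : V4 | (o oB (+) o oC) == (s sY && s sZ)) p o s.

Definition ineq_expr (p : behav R) : R := term1 p + term2 p + term3 p.

End Defs.

(* Main.v *)
Require Import Defs.
From HB Require Import structures.
From mathcomp Require Import all_boot all_order all_algebra.
From mathcomp Require Import ring lra.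
Import Order.TTheory GRing.Theory Num.Theory.
Set Implicit Arguments. Unset Strict Implicit.
Local Open Scope ring_scope.


Definition mk (a b c d : bool) : V4 :=
  [ffun i : 'I_4 => match nat_of_ord i with 0 => a | 1 => b | 2 => c | _ => d end].
Lemma mk0 a b c d : mk a b c d i0 = a. Proof. by rewrite ffunE. Qed.
Lemma mk1 a b c d : mk a b c d i1 = b. Proof. by rewrite ffunE. Qed.
Lemma mk2 a b c d : mk a b c d i2 = c. Proof. by rewrite ffunE. Qed.
Lemma mk3 a b c d : mk a b c d i3 = d. Proof. by rewrite ffunE. Qed.
Definition mkE := (mk0, mk1, mk2, mk3).

Lemma ord4_cases (P : 'I_4 -> Prop) : P i0 -> P i1 -> P i2 -> P i3 -> forall i, P i.
Proof.
move=> H0 H1 H2 H3 [[|[|[|[|n]]]] Hn] //.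
- by rewrite (_ : Ordinal Hn = i0) //; apply: val_inj.
- by rewrite (_ : Ordinal Hn = i1) //; apply: val_inj.
- by rewrite (_ : Ordinal Hn = i2) //; apply: val_inj.
- by rewrite (_ : Ordinal Hn = i3) //; apply: val_inj.
Qed.

Lemma mk_eta (o : V4) : o = mk (o i0) (o i1) (o i2) (o i3).
Proof. by apply/ffunP; apply: ord4_cases; rewrite mkE. Qed.

Lemma sum_V4 (R : realFieldType) (F : V4 -> R) :
  \sum_(o : V4) F o = \sum_(a : bool) \sum_(b : bool) \sum_(c : bool) \sum_(d : bool) F (mk a b c d).
Proof.
rewrite (reindex (fun t : bool * bool * bool * bool => mk t.1.1.1 t.1.1.2 t.1.2 t.2)) /=.
  by symmetry; rewrite !pair_bigA.
exists (fun o : V4 => (o i0, o i1, o i2, o i3)) => [[[[a b] c] d]|o] _ /=.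
  by rewrite !mkE.
by rewrite -mk_eta.
Qed.

Ltac side := by apply/forallP; apply: ord4_cases; rewrite !inE /= ?mkE ?eqxx.
Ltac ex := repeat (rewrite big_mkcond sum_V4 !big_bool /=); rewrite ?mkE /=.
Ltac ex_in H := repeat (rewrite big_mkcond sum_V4 !big_bool /= in H); rewrite ?mkE /= in H.

Section S.
Variable R : realFieldType.
Implicit Types p : behav R.
Definition Q p s := \sum_(o : V4 | o oB == true) p o s.
Definition inner3 p (s : V4) := \sum_(o : V4 | (o oB (+) o oC) == (s sY && s sZ)) p o s.

Lemma margE1 i p o s : marg [set i] p o s = \sum_(o' : V4 | o' i == o i) p o' s.
Proof.
apply: eq_bigl => o'; apply/forallP/idP => [H|H k].
  by have := H i; rewrite in_set1 eqxx.
by rewrite in_set1; apply/implyP => /eqP->.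
Qed.
Lemma margE3 i j k p o s : marg [set i; j; k] p o s =
  \sum_(o' : V4 | [&& o' i == o i, o' j == o j & o' k == o k]) p o' s.
Proof.
apply: eq_bigl => o'; apply/forallP/and3P => [H|[H1 H2 H3] l].
  have := H i; have := H j; have := H k; rewrite !inE !eqxx !orbT /=.
  by move=> -> -> ->.
by rewrite !inE; apply/implyP => /orP[/orP[/eqP->|/eqP->]|/eqP->].
Qed.

Lemma QE p s : Q p s = marg [set oB] p (mk false false true false) s.
Proof. by rewrite margE1 mk2. Qed.
Lemma chsh p (Hpos : forall o s, 0 <= p o s) (Hnorm : forall s, \sum_(o : V4) p o s = 1)
  (HB : indep [set oB] [set sX1; sX2; sZ] p) (HC : indep [set oA1; oA2; oC] [set sY] p) :
  let S := inner3 p (mk false false false false) + inner3 p (mk false false false true)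
     + inner3 p (mk false false true false) + inner3 p (mk false false true true) in
  S <= 3%:R + 2%:R * Q p (mk false false false false) /\
  S <= 5%:R - 2%:R * Q p (mk false false false false).
Proof.
have Nff := Hnorm (mk false false false false); rewrite sum_V4 !big_bool /= in Nff.
have Nft := Hnorm (mk false false false true); rewrite sum_V4 !big_bool /= in Nft.
have Ntf := Hnorm (mk false false true false); rewrite sum_V4 !big_bool /= in Ntf.
have Ntt := Hnorm (mk false false true true); rewrite sum_V4 !big_bool /= in Ntt.
have Bf : Q p (mk false false false false) = Q p (mk false false false true) by rewrite !QE; apply: HB; side.
rewrite /Q in Bf; ex_in Bf.
have Bt : Q p (mk false false true false) = Q p (mk false false true true) by rewrite !QE; apply: HB; side.
rewrite /Q in Bt; ex_in Bt.
have C1 := HC (mk false false false false) (mk false false false false) (mk false false true false) ltac:(side). rewrite !margE3 in C1. ex_in C1.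
have C2 := HC (mk false false false true) (mk false false false false) (mk false false true false) ltac:(side). rewrite !margE3 in C2. ex_in C2.
have C3 := HC (mk false true false false) (mk false false false false) (mk false false true false) ltac:(side). rewrite !margE3 in C3. ex_in C3.
have C4 := HC (mk false true false true) (mk false false false false) (mk false false true false) ltac:(side). rewrite !margE3 in C4. ex_in C4.
have C5 := HC (mk true false false false) (mk false false false false) (mk false false true false) ltac:(side). rewrite !margE3 in C5. ex_in C5.
have C6 := HC (mk true false false true) (mk false false false false) (mk false false true false) ltac:(side). rewrite !margE3 in C6. ex_in C6.
have C7 := HC (mk true true false false) (mk false false false false) (mk false false true false) ltac:(side). rewrite !margE3 in C7. ex_in C7.
have C8 := HC (mk true true false true) (mk false false false false) (mk false false true false) ltac:(side). rewrite !margE3 in C8. ex_in C8.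
have C9 := HC (mk false false false false) (mk false false false true) (mk false false true true) ltac:(side). rewrite !margE3 in C9. ex_in C9.
have C10 := HC (mk false false false true) (mk false false false true) (mk false false true true) ltac:(side). rewrite !margE3 in C10. ex_in C10.
have C11 := HC (mk false true false false) (mk false false false true) (mk false false true true) ltac:(side). rewrite !margE3 in C11. ex_in C11.
have C12 := HC (mk false true false true) (mk false false false true) (mk false false true true) ltac:(side). rewrite !margE3 in C12. ex_in C12.
have C13 := HC (mk true false false false) (mk false false false true) (mk false false true true) ltac:(side). rewrite !margE3 in C13. ex_in C13.
have C14 := HC (mk true false false true) (mk false false false true) (mk false false true true) ltac:(side). rewrite !margE3 in C14. ex_in C14.
have C15 := HC (mk true true false false) (mk false false false true) (mk false false true true) ltac:(side). rewrite !margE3 in C15. ex_in C15.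
have C16 := HC (mk true true false true) (mk false false false true) (mk false false true true) ltac:(side). rewrite !margE3 in C16. ex_in C16.
have P1 := Hpos (mk false false false false) (mk false false false false).
have P2 := Hpos (mk false false false true) (mk false false false false).
have P3 := Hpos (mk false false true false) (mk false false false false).
have P4 := Hpos (mk false false true true) (mk false false false false).
have P5 := Hpos (mk false true false false) (mk false false false false).
have P6 := Hpos (mk false true false true) (mk false false false false).
have P7 := Hpos (mk false true true false) (mk false false false false).
have P8 := Hpos (mk false true true true) (mk false false false false).
have P9 := Hpos (mk true false false false) (mk false false false false).
have P10 := Hpos (mk true false false true) (mk false false false false).
have P11 := Hpos (mk true false true false) (mk false false false false).
have P12 := Hpos (mk true false true true) (mk false false false false).
have P13 := Hpos (mk true true false false) (mk false false false false).
have P14 := Hpos (mk true true false true) (mk false false false false).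
have P15 := Hpos (mk true true true false) (mk false false false false).
have P16 := Hpos (mk true true true true) (mk false false false false).
have P17 := Hpos (mk false false false false) (mk false false false true).
have P18 := Hpos (mk false false false true) (mk false false false true).
have P19 := Hpos (mk false false true false) (mk false false false true).
have P20 := Hpos (mk false false true true) (mk false false false true).
have P21 := Hpos (mk false true false false) (mk false false false true).
have P22 := Hpos (mk false true false true) (mk false false false true).
have P23 := Hpos (mk false true true false) (mk false false false true).
have P24 := Hpos (mk false true true true) (mk false false false true).
have P25 := Hpos (mk true false false false) (mk false false false true).
have P26 := Hpos (mk true false false true) (mk false false false true).
have P27 := Hpos (mk true false true false) (mk false false false true).
have P28 := Hpos (mk true false true true) (mk false false false true).
have P29 := Hpos (mk true true false false) (mk false false false true).
have P30 := Hpos (mk true true false true) (mk false false false true).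
have P31 := Hpos (mk true true true false) (mk false false false true).
have P32 := Hpos (mk true true true true) (mk false false false true).
have P33 := Hpos (mk false false false false) (mk false false true false).
have P34 := Hpos (mk false false false true) (mk false false true false).
have P35 := Hpos (mk false false true false) (mk false false true false).
have P36 := Hpos (mk false false true true) (mk false false true false).
have P37 := Hpos (mk false true false false) (mk false false true false).
have P38 := Hpos (mk false true false true) (mk false false true false).
have P39 := Hpos (mk false true true false) (mk false false true false).
have P40 := Hpos (mk false true true true) (mk false false true false).
have P41 := Hpos (mk true false false false) (mk false false true false).
have P42 := Hpos (mk true false false true) (mk false false true false).
have P43 := Hpos (mk true false true false) (mk false false true false).
have P44 := Hpos (mk true false true true) (mk false false true false).
have P45 := Hpos (mk true true false false) (mk false false true false).
have P46 := Hpos (mk true true false true) (mk false false true false).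
have P47 := Hpos (mk true true true false) (mk false false true false).
have P48 := Hpos (mk true true true true) (mk false false true false).
have P49 := Hpos (mk false false false false) (mk false false true true).
have P50 := Hpos (mk false false false true) (mk false false true true).
have P51 := Hpos (mk false false true false) (mk false false true true).
have P52 := Hpos (mk false false true true) (mk false false true true).
have P53 := Hpos (mk false true false false) (mk false false true true).
have P54 := Hpos (mk false true false true) (mk false false true true).
have P55 := Hpos (mk false true true false) (mk false false true true).
have P56 := Hpos (mk false true true true) (mk false false true true).
have P57 := Hpos (mk true false false false) (mk false false true true).
have P58 := Hpos (mk true false false true) (mk false false true true).
have P59 := Hpos (mk true false true false) (mk false false true true).
have P60 := Hpos (mk true false true true) (mk false false true true).
have P61 := Hpos (mk true true false false) (mk false false true true).
have P62 := Hpos (mk true true false true) (mk false false true true).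
have P63 := Hpos (mk true true true false) (mk false false true true).
have P64 := Hpos (mk true true true true) (mk false false true true).
rewrite /= /inner3 /Q; ex. split; lra.
Qed.
End S.


Section S2.
Variable R : realFieldType.
Implicit Types p : behav R.
Definition inner1 p (s : V4) := \sum_(o : V4 | (o oB == false) && (o oA2 == s sX1)) p o s.
Definition inner2 p (s : V4) := \sum_(o : V4 | (o oB == true) && (o oA1 == s sX2)) p o s.

Lemma margE2 i j p o s : marg [set i; j] p o s =
  \sum_(o' : V4 | (o' i == o i) && (o' j == o j)) p o' s.
Proof.
apply: eq_bigl => o'; apply/forallP/andP => [H|[H1 H2] l].
  have := H i; have := H j; rewrite !inE !eqxx !orbT /=.
  by move=> -> ->.
by rewrite !inE; apply/implyP => /orP[/eqP->|/eqP->].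
Qed.

Lemma Qeq p (HB : indep [set oB] [set sX1; sX2; sZ] p) x1 x2 y z :
  Q p (mk x1 x2 y z) = Q p (mk false false y false).
Proof. by rewrite !QE; apply: HB; side. Qed.

Lemma L1 p (Hpos : forall o s, 0 <= p o s) (Hnorm : forall s, \sum_(o : V4) p o s = 1) x1 x2 y z :
  inner1 p (mk x1 x2 y z) <= 1 - Q p (mk x1 x2 y z).
Proof.
have N := Hnorm (mk x1 x2 y z); ex_in N.
have P1 := Hpos (mk false false false false) (mk x1 x2 y z).
have P2 := Hpos (mk false false false true) (mk x1 x2 y z).
have P3 := Hpos (mk false false true false) (mk x1 x2 y z).
have P4 := Hpos (mk false false true true) (mk x1 x2 y z).
have P5 := Hpos (mk false true false false) (mk x1 x2 y z).
have P6 := Hpos (mk false true false true) (mk x1 x2 y z).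
have P7 := Hpos (mk false true true false) (mk x1 x2 y z).
have P8 := Hpos (mk false true true true) (mk x1 x2 y z).
have P9 := Hpos (mk true false false false) (mk x1 x2 y z).
have P10 := Hpos (mk true false false true) (mk x1 x2 y z).
have P11 := Hpos (mk true false true false) (mk x1 x2 y z).
have P12 := Hpos (mk true false true true) (mk x1 x2 y z).
have P13 := Hpos (mk true true false false) (mk x1 x2 y z).
have P14 := Hpos (mk true true false true) (mk x1 x2 y z).
have P15 := Hpos (mk true true true false) (mk x1 x2 y z).
have P16 := Hpos (mk true true true true) (mk x1 x2 y z).
rewrite /inner1 /Q; ex; destruct x1; rewrite /=; lra.
Qed.

Lemma L1' p (Hpos : forall o s, 0 <= p o s) x1 x2 y z :
  inner2 p (mk x1 x2 y z) <= Q p (mk x1 x2 y z).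
Proof.
have P1 := Hpos (mk false false false false) (mk x1 x2 y z).
have P2 := Hpos (mk false false false true) (mk x1 x2 y z).
have P3 := Hpos (mk false false true false) (mk x1 x2 y z).
have P4 := Hpos (mk false false true true) (mk x1 x2 y z).
have P5 := Hpos (mk false true false false) (mk x1 x2 y z).
have P6 := Hpos (mk false true false true) (mk x1 x2 y z).
have P7 := Hpos (mk false true true false) (mk x1 x2 y z).
have P8 := Hpos (mk false true true true) (mk x1 x2 y z).
have P9 := Hpos (mk true false false false) (mk x1 x2 y z).
have P10 := Hpos (mk true false false true) (mk x1 x2 y z).
have P11 := Hpos (mk true false true false) (mk x1 x2 y z).
have P12 := Hpos (mk true false true true) (mk x1 x2 y z).
have P13 := Hpos (mk true true false false) (mk x1 x2 y z).
have P14 := Hpos (mk true true false true) (mk x1 x2 y z).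
have P15 := Hpos (mk true true true false) (mk x1 x2 y z).
have P16 := Hpos (mk true true true true) (mk x1 x2 y z).
rewrite /inner2 /Q; ex; destruct x2; rewrite /=; lra.
Qed.

Lemma L3 p (HA : indep [set oA1; oB] [set sX2] p) x1 y z :
  inner2 p (mk x1 false y z) + inner2 p (mk x1 true y z) = Q p (mk x1 false y z).
Proof.
have E := HA (mk true false true false) (mk x1 false y z) (mk x1 true y z) ltac:(side).
rewrite !margE2 in E; ex_in E.
rewrite /inner2 /Q; ex; lra.
Qed.

Lemma L3' p (Hnorm : forall s, \sum_(o : V4) p o s = 1) (HA : indep [set oA2; oB] [set sX1] p) x2 y z :
  inner1 p (mk false x2 y z) + inner1 p (mk true x2 y z) = 1 - Q p (mk false x2 y z).
Proof.
have E := HA (mk false true false false) (mk false x2 y z) (mk true x2 y z) ltac:(side).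
rewrite !margE2 in E; ex_in E.
have N := Hnorm (mk false x2 y z); ex_in N.
rewrite /inner1 /Q; ex; lra.
Qed.

Lemma exprE p : ineq_expr p = 8^-1 * (\sum_(s : V4 | s sY == false) inner1 p s)
  + 8^-1 * (\sum_(s : V4 | s sY == false) inner2 p s)
  + 4^-1 * (\sum_(s : V4 | (s sX1 == false) && (s sX2 == false)) inner3 p s).
Proof. by []. Qed.
Lemma boundLC1 p : LC1 p -> ineq_expr p <= 7%:R / 4%:R.
Proof.
case=> [[[Hpos Hnorm] [HC HB]] [HA _]].
have [C1 C2] := chsh Hpos Hnorm HB HC.
have Q1 := Qeq HB false false false false.
have M1 := L1 Hpos Hnorm false false false false.
have Q2 := Qeq HB false false false true.
have M2 := L1 Hpos Hnorm false false false true.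
have Q3 := Qeq HB false true false false.
have M3 := L1 Hpos Hnorm false true false false.
have Q4 := Qeq HB false true false true.
have M4 := L1 Hpos Hnorm false true false true.
have Q5 := Qeq HB true false false false.
have M5 := L1 Hpos Hnorm true false false false.
have Q6 := Qeq HB true false false true.
have M6 := L1 Hpos Hnorm true false false true.
have Q7 := Qeq HB true true false false.
have M7 := L1 Hpos Hnorm true true false false.
have Q8 := Qeq HB true true false true.
have M8 := L1 Hpos Hnorm true true false true.
have K1 := L3 HA false false false.
have K2 := L3 HA false false true.
have K3 := L3 HA true false false.
have K4 := L3 HA true false true.
rewrite exprE; ex. lra.
Qed.
Lemma boundLC2 p : LC2 p -> ineq_expr p <= 7%:R / 4%:R.
Proof.
case=> [[[Hpos Hnorm] [HC HB]] [HA _]].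
have [C1 C2] := chsh Hpos Hnorm HB HC.
have Q1 := Qeq HB false false false false.
have M1 := L1' Hpos false false false false.
have Q2 := Qeq HB false false false true.
have M2 := L1' Hpos false false false true.
have Q3 := Qeq HB false true false false.
have M3 := L1' Hpos false true false false.
have Q4 := Qeq HB false true false true.
have M4 := L1' Hpos false true false true.
have Q5 := Qeq HB true false false false.
have M5 := L1' Hpos true false false false.
have Q6 := Qeq HB true false false true.
have M6 := L1' Hpos true false false true.
have Q7 := Qeq HB true true false false.
have M7 := L1' Hpos true true false false.
have Q8 := Qeq HB true true false true.
have M8 := L1' Hpos true true false true.
have K1 := L3' Hnorm HA false false false.
have K2 := L3' Hnorm HA false false true.
have K3 := L3' Hnorm HA true false false.
have K4 := L3' Hnorm HA true false true.
rewrite exprE; ex. lra.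
Qed.
End S2.


Section S3.
Variable R : realFieldType.
Implicit Types p : behav R.

Lemma lin p p1 p2 mu (Hp : forall o s, p o s = mu * p1 o s + (1-mu) * p2 o s)
  (P : pred V4) (P' : V4 -> pred V4) :
  \sum_(s | P s) \sum_(o | P' s o) p o s =
  mu * (\sum_(s | P s) \sum_(o | P' s o) p1 o s) + (1-mu) * (\sum_(s | P s) \sum_(o | P' s o) p2 o s).
Proof.
rewrite !mulr_sumr -big_split; apply: eq_bigr => s _.
rewrite !mulr_sumr -big_split; apply: eq_bigr => o _; exact: Hp.
Qed.

Lemma expr_lin p p1 p2 mu (Hp : forall o s, p o s = mu * p1 o s + (1-mu) * p2 o s) :
  ineq_expr p = mu * ineq_expr p1 + (1 - mu) * ineq_expr p2.
Proof.
rewrite /ineq_expr /term1 /term2 /term3 !(lin Hp); ring.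
Qed.

Definition pstar : behav R := fun o s =>
  if [&& o oA1 == false, o oA2 == s sX1 & o oC == o oB (+) (s sY && s sZ)] then 2^-1 else 0.
Definition ptriv : behav R := fun o s =>
  if [&& o oA1 == false, o oA2 == false, o oB == false & o oC == false] then 1 else 0.

Lemma pstar_distr : is_cond_distr pstar.
Proof.
split.
  by move=> o s; rewrite /pstar; case: ifP => _; lra.
move=> s; rewrite /pstar /=; move: (s sX1) (s sY && s sZ) => x k.
ex; case: x; case: k; rewrite /=; lra.
Qed.

Lemma ptriv_distr : is_cond_distr ptriv.
Proof.
split.
  by move=> o s; rewrite /ptriv; case: ifP => _; lra.
move=> s; rewrite /ptriv /=; ex; lra.
Qed.

Lemma margS_b o s : marg [set oB] pstar o s = 2^-1.
Proof.
rewrite margE1 /pstar /=; move: (o i2) (s sX1) (s sY && s sZ) => b x k.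
ex; case: b; case: x; case: k; rewrite /=; lra.
Qed.

Lemma margS_a1a2c o s : marg [set oA1; oA2; oC] pstar o s =
  if (o oA1 == false) && (o oA2 == s sX1) then 2^-1 else 0.
Proof.
rewrite margE3 /pstar /=; move: (o i0) (o i1) (o i3) (s sX1) (s sY && s sZ) => a1 a2 c x k.
ex; case: a1; case: a2; case: c; case: x; case: k; rewrite /=; lra.
Qed.

Lemma margS_a1b o s : marg [set oA1; oB] pstar o s =
  if (o oA1 == false) then 2^-1 else 0.
Proof.
rewrite margE2 /pstar /=; move: (o i0) (o i2) (s sX1) (s sY && s sZ) => a1 b x k.
ex; case: a1; case: b; case: x; case: k; rewrite /=; lra.
Qed.

Lemma margS_a1a2b o s : marg [set oA1; oA2; oB] pstar o s =
  if (o oA1 == false) && (o oA2 == s sX1) then 2^-1 else 0.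
Proof.
rewrite margE3 /pstar /=; move: (o i0) (o i1) (o i2) (s sX1) (s sY && s sZ) => a1 a2 b x k.
ex; case: a1; case: a2; case: b; case: x; case: k; rewrite /=; lra.
Qed.


Lemma indep_const S T p (H : forall o s s', p o s = p o s') : indep S T p.
Proof. by move=> o s s' _; apply: eq_bigr => o' _; apply: H. Qed.

Lemma sameX1 (T : {set 'I_4}) (s s' : V4) : i0 \notin T ->
  [forall i in ~: T, s i == s' i] -> s' sX1 = s sX1.
Proof. by move=> Hi /forallP /(_ i0); rewrite !inE Hi /= => /eqP ->. Qed.

Lemma pstar_LC1 : LC1 pstar.
Proof.
split; first split; first exact: pstar_distr.
  split.
    move=> o s s' H; rewrite !margS_a1a2c.
    by rewrite (@sameX1 [set sY] s s') // inE.
  by move=> o s s' _; rewrite !margS_b.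
split.
  by move=> o s s' _; rewrite !margS_a1b.
move=> o s s' H; rewrite !margS_a1a2b.
by rewrite (@sameX1 [set sZ] s s') // inE.
Qed.

Lemma ptriv_LC2 : LC2 ptriv.
Proof.
split; first split; first exact: ptriv_distr.
  by split; apply: indep_const.
by split; apply: indep_const.
Qed.

Lemma in1S s : inner1 pstar s = 2^-1.
Proof.
rewrite /inner1 /pstar /=; move: (s sX1) (s sY && s sZ) => x k.
ex; case: x; case: k; rewrite /=; lra.
Qed.
Lemma in2S s : inner2 pstar s = if s sX2 == false then 2^-1 else 0.
Proof.
rewrite /inner2 /pstar /=; move: (s sX1) (s sX2) (s sY && s sZ) => x x2 k.
ex; case: x; case: x2; case: k; rewrite /=; lra.
Qed.
Lemma in3S s : inner3 pstar s = 1.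
Proof.
rewrite /inner3 /pstar /=; move: (s sX1) (s sY && s sZ) => x k.
ex; case: x; case: k; rewrite /=; lra.
Qed.

Lemma pstar_val : ineq_expr pstar = 7%:R / 4%:R.
Proof.
rewrite exprE; ex; rewrite !in1S !in2S !in3S !mkE /=; lra.
Qed.

End S3.

Theorem theorem1 (R : realFieldType) :
  (forall p : behav R, LC p -> ineq_expr p <= 7%:R / 4%:R) /\
  (exists p : behav R, LC p /\ ineq_expr p = 7%:R / 4%:R).
Proof.
split.
  move=> p [mu [p1 [p2 [/andP[H0 H1] HL1 HL2 Hp]]]].
  rewrite (expr_lin Hp).
  have B1 := boundLC1 HL1; have B2 := boundLC2 HL2.
  have h1 : 0 <= mu * (7%:R / 4%:R - ineq_expr p1) by apply: mulr_ge0; lra.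
  have h2 : 0 <= (1 - mu) * (7%:R / 4%:R - ineq_expr p2) by apply: mulr_ge0; lra.
  nra.
exists (@pstar R); split; last exact: pstar_val.
exists 1, (@pstar R), (@ptriv R); split.
- by rewrite ler01 lexx.
- exact: pstar_LC1.
- exact: ptriv_LC2.
- by move=> o s; rewrite mul1r subrr mul0r addr0.
Qed.
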